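(* If $\varphi\in\mathrm{maxHML}$ (resp. $\varphi\in\mathrm{minHML}$) is closed, then there is some $\psi\in\mathrm{sHML}$ (resp. $\psi\in\mathrm{cHML}$) such that $[\![\psi]\!]_L=[\![\varphi]\!]_L$.
   Context: Fix a finite set $\mathrm{Act}$ of actions. recHML formulae: $\varphi::=\mathrm{tt}\mid\mathrm{ff}\mid\varphi\vee\varphi\mid\varphi\wedge\varphi\mid\langle A\rangle\varphi\mid[A]\varphi\mid\min X.\varphi\mid\max X.\varphi\mid X$ ($A\subseteq\mathrm{Act}$), guarded. Fragments: $\mathrm{maxHML}$: $\varphi::=\mathrm{tt}\mid\mathrm{ff}\mid[A]\varphi\mid\langle A\rangle\varphi\mid\varphi\vee\varphi\mid\varphi\wedge\varphi\mid\max X.\varphi\mid X$; $\mathrm{minHML}$: $\varphi::=\mathrm{tt}\mid\mathrm{ff}\mid[A]\varphi\mid\langle A\rangle\varphi\mid\varphi\vee\varphi\mid\varphi\wedge\varphi\mid\min X.\varphi\mid X$; $\mathrm{sHML}$: $\varphi::=\mathrm{tt}\mid\mathrm{ff}\mid[A]\varphi\mid\varphi\wedge\varphi\mid\max X.\varphi\mid X$; $\mathrm{cHML}$: $\varphi::=\mathrm{tt}\mid\mathrm{ff}\mid\langle A\rangle\varphi\mid\varphi\vee\varphi\mid\min X.\varphi\mid X$. Linear-time semantics over infinite traces $\mathrm{Trc}=\mathrm{Act}^\omega$: $[\![\mathrm{tt}]\!]_L=\mathrm{Trc}$, $[\![\mathrm{ff}]\!]_L=\emptyset$, $\vee,\wedge$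 union/intersection, $[\![\langle A\rangle\varphi,\sigma]\!]_L=\{at\mid a\in A,t\in[\![\varphi,\sigma]\!]_L\}$, $[\![[A]\varphi,\sigma]\!]_L=\{t\mid\forall a\in A,\forall t'.\ t=at'\Rightarrow t'\in[\![\varphi,\sigma]\!]_L\}$, $[\![\min X.\varphi,\sigma]\!]_L=\bigcap\{S\mid[\![\varphi,\sigma[X\mapsto S]]\!]_L\subseteq S\}$, $[\![\max X.\varphi,\sigma]\!]_L=\bigcup\{S\mid S\subseteq[\![\varphi,\sigma[X\mapsto S]]\!]_L\}$, $[\![X,\sigma]\!]_L=\sigma(X)$. *)

(* Defs.v *)
From mathcomp Require Import all_boot.
Set Implicit Arguments. Unset Strict Implicit. Unset Printing Implicit Defensive.

Inductive form (Act : finType) : Type :=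
| Ftt | Fff
| For  of form Act & form Act
| Fand of form Act & form Act
| Fdia of {set Act} & form Act
| Fbox of {set Act} & form Act
| Fmin of nat & form Act
| Fmax of nat & form Act
| Fvar of nat.
Arguments Ftt {Act}. Arguments Fff {Act}. Arguments Fvar {Act}.

Definition trace (Act : finType) := nat -> Act.
Definition ttail (Act : finType) (t : trace Act) : trace Act := fun n => t n.+1.
Definition tcons (Act : finType) (a : Act) (t : trace Act) : trace Act :=
  fun n => if n is n'.+1 then t n' else a.

Definition tset (Act : finType) := trace Act -> Prop.
Definition env (Act : finType) := nat -> tset Act.
Definition upd (Act : finType) (s : env Act) (X : nat) (S : tset Act) : env Act :=
  fun Y => if Y == X then S else s Y.

Fixpoint sem (Act : finType) (f : form Act) (s : env Act) : tset Act :=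
  match f with
  | Ftt => fun _ => True
  | Fff => fun _ => False
  | For f1 f2 => fun t => sem f1 s t \/ sem f2 s t
  | Fand f1 f2 => fun t => sem f1 s t /\ sem f2 s t
  | Fdia A f1 => fun t => exists a t', a \in A /\ sem f1 s t' /\ t = tcons a t'
  | Fbox A f1 => fun t => forall a t', a \in A -> t = tcons a t' -> sem f1 s t'
  | Fmin X f1 => fun t =>
      forall S : tset Act, (forall u, sem f1 (upd s X S) u -> S u) -> S t
  | Fmax X f1 => fun t =>
      exists S : tset Act, (forall u, S u -> sem f1 (upd s X S) u) /\ S t
  | Fvar X => s X
  end.

Definition env0 (Act : finType) : env Act := fun _ _ => False.
Definition semL (Act : finType) (f : form Act) : tset Act := sem f (@env0 Act).

Fixpoint closed_in (Act : finType) (bnd : seq nat) (f : form Act) : bool :=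
  match f with
  | Ftt | Fff => true
  | For f1 f2 | Fand f1 f2 => closed_in bnd f1 && closed_in bnd f2
  | Fdia _ f1 | Fbox _ f1 => closed_in bnd f1
  | Fmin X f1 | Fmax X f1 => closed_in (X :: bnd) f1
  | Fvar X => X \in bnd
  end.
Definition closedF (Act : finType) (f : form Act) := closed_in [::] f.

(* guardedness: every occurrence of a variable lies under a modality
   within the scope of its binder; [ung] = variables currently unguarded *)
Fixpoint guarded_in (Act : finType) (ung : seq nat) (f : form Act) : bool :=
  match f with
  | Ftt | Fff => true
  | For f1 f2 | Fand f1 f2 => guarded_in ung f1 && guarded_in ung f2
  | Fdia _ f1 | Fbox _ f1 => guarded_in [::] f1
  | Fmin X f1 | Fmax X f1 => guarded_in (X :: ung) f1
  | Fvar X => X \notin ung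
  end.
Definition guarded (Act : finType) (f : form Act) := guarded_in [::] f.

Fixpoint maxHML (Act : finType) (f : form Act) : bool :=
  match f with
  | Ftt | Fff | Fvar _ => true
  | For f1 f2 | Fand f1 f2 => maxHML f1 && maxHML f2
  | Fdia _ f1 | Fbox _ f1 | Fmax _ f1 => maxHML f1
  | Fmin _ _ => false
  end.
Fixpoint minHML (Act : finType) (f : form Act) : bool :=
  match f with
  | Ftt | Fff | Fvar _ => true
  | For f1 f2 | Fand f1 f2 => minHML f1 && minHML f2
  | Fdia _ f1 | Fbox _ f1 | Fmin _ f1 => minHML f1
  | Fmax _ _ => false
  end.
Fixpoint sHML (Act : finType) (f : form Act) : bool :=
  match f with
  | Ftt | Fff | Fvar _ => true
  | Fand f1 f2 => sHML f1 && sHML f2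
  | Fbox _ f1 | Fmax _ f1 => sHML f1
  | _ => false
  end.
Fixpoint cHML (Act : finType) (f : form Act) : bool :=
  match f with
  | Ftt | Fff | Fvar _ => true
  | For f1 f2 => cHML f1 && cHML f2
  | Fdia _ f1 | Fmin _ f1 => cHML f1
  | _ => false
  end.

Definition recHML (Act : finType) (f : form Act) := guarded f.

(* Main.v *)
From Stdlib Require Import Classical ClassicalEpsilon FunctionalExtensionality List.
Require Import Defs.
From mathcomp Require Import all_boot.
Set Implicit Arguments. Unset Strict Implicit. Unset Printing Implicit Defensive.

Section Basics.
Variable Act : finType.
Local Notation form := (form Act).
Local Notation tset := (tset Act).
Local Notation env := (env Act).
Local Notation trace := (trace Act).

Definition esub (s1 s2 : env) := forall X t, s1 X t -> s2 X t.

Lemma esub_upd (s1 s2 : env) X S : esub s1 s2 -> esub (upd s1 X S) (upd s2 X S).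
Proof. move=> H Y v; rewrite /upd; case: (Y == X) => //; exact: H. Qed.

Lemma sem_mono (f : form) : forall s1 s2, esub s1 s2 -> forall t, sem f s1 t -> sem f s2 t.
Proof.
elim: f => //=.
- move=> f1 IH1 f2 IH2 s1 s2 H t [] ?; [left; exact: IH1 H _ _ | right; exact: IH2 H _ _].
- move=> f1 IH1 f2 IH2 s1 s2 H t [] ??; split; [exact: IH1 H _ _| exact: IH2 H _ _].
- move=> A f1 IH s1 s2 H t [a [t' [Ha [H1 ->]]]]. exists a, t'; split=>//; split=>//; exact: IH H _ _.
- move=> A f1 IH s1 s2 H t H1 a t' Ha Et. exact: IH H _ (H1 a t' Ha Et).
- move=> X f1 IH s1 s2 H t H1 S HS. apply: H1 => u Hu. apply: HS. apply: IH Hu.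
  exact: esub_upd.
- move=> X f1 IH s1 s2 H t [S [HS St]]. exists S; split=>// u Su. apply: IH (HS u Su).
  exact: esub_upd.
- move=> X s1 s2 H t; exact: H.
Qed.

Lemma max_unfold1 X (f : form) s t :
  sem (Fmax X f) s t -> sem f (upd s X (sem (Fmax X f) s)) t.
Proof.
move=> [S [HS St]]. apply: sem_mono (HS _ St).
move=> Y v; rewrite /upd; case: (Y == X) => // Sv. by exists S.
Qed.

Lemma max_unfold X (f : form) s t :
  sem (Fmax X f) s t <-> sem f (upd s X (sem (Fmax X f) s)) t.
Proof.
split; first exact: max_unfold1.
move=> H. exists (sem f (upd s X (sem (Fmax X f) s))); split=> // u Hu.
apply: sem_mono Hu. move=> Y v; rewrite /upd; case: (Y == X) => // Hv.
exact: max_unfold1.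
Qed.

Lemma tcons_eta (t : trace) : tcons (t 0) (ttail t) = t.
Proof. apply: functional_extensionality; by case. Qed.

Lemma tcons_inj (a b : Act) (t t' : trace) : tcons a t = tcons b t' -> a = b /\ t = t'.
Proof.
move=> E; split; first exact: (f_equal (fun f => f 0) E).
apply: functional_extensionality => n. exact: (f_equal (fun f => f n.+1) E).
Qed.

Lemma tcons_head a (t : trace) : tcons a t 0 = a. Proof. by []. Qed.
Lemma tcons_tail a (t : trace) : ttail (tcons a t) = t. Proof. by []. Qed.

Definition Safe (R : tset) : tset :=
  fun t => forall n, exists t', (forall i, i < n -> t' i = t i) /\ R t'.

Lemma Safe_mono (R1 R2 : tset) : (forall t, R1 t -> R2 t) -> forall t, Safe R1 t -> Safe R2 t.
Proof. move=> H t HS n; have [t' [A B]] := HS n; exists t'; split=>//; exact: H. Qed.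

Lemma Safe_empty t : ~ Safe (fun _ => False) t.
Proof. by move=> /(_ 0) [t' []]. Qed.

Lemma Safe_tail (R : tset) t (a : {set Act}) :
  Safe (fun u => exists b u', b \in a /\ R u' /\ u = tcons b u') t ->
  t 0 \in a /\ Safe R (ttail t).
Proof.
move=> H; split.
  have [t' [Ag [b [u' [Hb [_ E]]]]]] := H 1.
  by rewrite -Ag // E.
move=> n; have [t' [Ag [b [u' [Hb [Ru E]]]]]] := H n.+1.
exists u'; split=> // i Hi. rewrite /ttail -Ag // E //.
Qed.

Lemma Safe_box (R : tset) t (A : {set Act}) :
  Safe (fun u => forall b u', b \in A -> u = tcons b u' -> R u') t ->
  t 0 \in A -> Safe R (ttail t).
Proof.
move=> H HA n; have [t' [Ag Rt]] := H n.+1.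
exists (ttail t'); split.
  move=> i Hi; rewrite /ttail Ag //.
apply: (Rt (t' 0)); first by rewrite Ag.
by rewrite tcons_eta.
Qed.

Lemma Safe_or (R1 R2 : tset) t : Safe (fun u => R1 u \/ R2 u) t -> Safe R1 t \/ Safe R2 t.
Proof.
move=> H. apply: NNPP => Hn.
have [H1 H2] : ~ Safe R1 t /\ ~ Safe R2 t by split=> K; apply: Hn; [left|right].
have [n1 Hn1] := not_all_ex_not _ _ H1.
have [n2 Hn2] := not_all_ex_not _ _ H2.
have [t' [Ag [R1t|R2t]]] := H (maxn n1 n2).
  apply: Hn1; exists t'; split=> // i Hi; apply: Ag; by rewrite leq_max Hi.
apply: Hn2; exists t'; split=> // i Hi; apply: Ag; by rewrite leq_max Hi orbT.
Qed.

Lemma safe_lemma (f : form) : maxHML f ->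
  forall s t, Safe (sem f s) t -> sem f (fun X => Safe (s X)) t.
Proof.
elim: f => //=.
- move=> _ s t H; exact: (Safe_empty H).
- move=> f1 IH1 f2 IH2 /andP[m1 m2] s t /Safe_or [H|H]; [left; exact: IH1|right; exact: IH2].
- move=> f1 IH1 f2 IH2 /andP[m1 m2] s t H; split; [apply: IH1 => //|apply: IH2 => //];
  apply: Safe_mono H; by move=> u [].
- move=> A f1 IH m s t /Safe_tail [HA HT]. exists (t 0), (ttail t); split=> //; split.
  exact: IH. by rewrite tcons_eta.
- move=> A f1 IH m s t H b t' Hb E. rewrite E in H.
  have := Safe_box H Hb. rewrite tcons_tail => HS. exact: IH.
- move=> X f1 IH m s t H. exists (Safe (sem (Fmax X f1) s)); split=> // u Hu.
  have Hu' : Safe (sem f1 (upd s X (sem (Fmax X f1) s))) u.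
    apply: Safe_mono Hu => v; exact: max_unfold1.
  apply: sem_mono (IH m _ _ Hu').
  move=> Y v; rewrite /upd; by case: (Y == X).
Qed.

End Basics.

Section Deriv.
Variable Act : finType.
Local Notation form := (form Act).
Local Notation tset := (tset Act).
Local Notation env := (env Act).
Local Notation trace := (trace Act).

Inductive Pos (P : tset -> Prop) : tset -> Prop :=
| Pat u : P u -> Pos P u
| Ptop : Pos P (fun _ => True)
| Pbot : Pos P (fun _ => False)
| Por R1 R2 : Pos P R1 -> Pos P R2 -> Pos P (fun t => R1 t \/ R2 t)
| Pand R1 R2 : Pos P R1 -> Pos P R2 -> Pos P (fun t => R1 t /\ R2 t)
| Pext R1 R2 : Pos P R1 -> (forall t, R1 t <-> R2 t) -> Pos P R2.

Definition der (a : Act) (R : tset) : tset := fun t => R (tcons a t).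

Fixpoint fl (f : form) (s : env) : seq tset :=
  sem f s :: match f with
  | For f1 f2 | Fand f1 f2 => fl f1 s ++ fl f2 s
  | Fdia _ f1 | Fbox _ f1 => fl f1 s
  | Fmin X f1 | Fmax X f1 => fl f1 (upd s X (sem f s))
  | _ => [::] end.

Lemma fl_head f s : List.In (sem f s) (fl f s).
Proof. by case: f => /=; left. Qed.

Variable P : tset -> Prop.

Lemma derA (f : form) : maxHML f -> forall s ung, guarded_in ung f ->
  (forall Y a, Y \notin ung -> Pos P (der a (s Y))) ->
  (forall u, List.In u (fl f s) -> P u) -> forall a, Pos P (der a (sem f s)).
Proof.
elim: f => /=.
- move=> *; apply: Pext (Ptop P) _; by [].
- move=> *; apply: Pext (Pbot P) _; by [].
- move=> f1 IH1 f2 IH2 /andP[m1 m2] s ung /andP[g1 g2] HY HP a.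
  apply: Pext (Por (IH1 m1 s ung g1 HY _ a) (IH2 m2 s ung g2 HY _ a)) _ => //.
  + move=> u Hu; apply: HP; right; apply: in_or_app; by left.
  + move=> u Hu; apply: HP; right; apply: in_or_app; by right.
- move=> f1 IH1 f2 IH2 /andP[m1 m2] s ung /andP[g1 g2] HY HP a.
  apply: Pext (Pand (IH1 m1 s ung g1 HY _ a) (IH2 m2 s ung g2 HY _ a)) _ => //.
  + move=> u Hu; apply: HP; right; apply: in_or_app; by left.
  + move=> u Hu; apply: HP; right; apply: in_or_app; by right.
- move=> A f1 _ m s ung g HY HP a.
  have Hat : P (sem f1 s) by apply: HP; right; exact: fl_head.
  case Ha: (a \in A).
  + apply: Pext (Pat Hat) _ => t; rewrite /der; split.
      move=> H; exists a, t; by rewrite Ha.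
    by move=> [b [t' [_ [H /tcons_inj [_ ->]]]]].
  + apply: Pext (Pbot P) _ => t; rewrite /der; split => //.
    move=> [b [t' [Hb [_ /tcons_inj [E _]]]]]. by rewrite E Hb in Ha.
- move=> A f1 _ m s ung g HY HP a.
  have Hat : P (sem f1 s) by apply: HP; right; exact: fl_head.
  case Ha: (a \in A).
  + apply: Pext (Pat Hat) _ => t; rewrite /der; split.
      by move=> H b t' _ /tcons_inj [_ <-].
    move=> H; exact: (H a t Ha erefl).
  + apply: Pext (Ptop P) _ => t; rewrite /der; split => // _ b t' Hb /tcons_inj [E _].
    by rewrite E Hb in Ha.
- by [].
- move=> X f1 IH m s ung g HY HP a.
  set s' := upd s X (sem (Fmax X f1) s).
  have HY' : forall Y a, Y \notin X :: ung -> Pos P (der a (s' Y)).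
    move=> Y b; rewrite in_cons negb_or => /andP[nX nU].
    rewrite /s' /upd (negbTE nX); exact: HY.
  have := IH m s' (X :: ung) g HY' (fun u Hu => HP u (or_intror Hu)) a.
  move=> H; apply: Pext H _ => t; rewrite /der; split => Ht; first by apply/max_unfold.
  by apply/max_unfold.
- move=> X _ s ung g HY HP a; exact: HY.
Qed.

Lemma derB (f : form) : maxHML f -> forall s ung, guarded_in ung f ->
  (forall Y a, Pos P (der a (s Y))) ->
  (forall u, List.In u (fl f s) -> P u) ->
  forall u, List.In u (fl f s) -> forall a, Pos P (der a u).
Proof.
have gen : forall f s ung, maxHML f -> guarded_in ung f ->
  (forall Y a, Pos P (der a (s Y))) ->
  (forall u, List.In u (fl f s) -> P u) -> forall a, Pos P (der a (sem f s)).
  move=> g s ung m gg HY HP; apply: (derA m gg) => // Y a _; exact: HY.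
elim: f => /=.
- move=> m s ung g HY HP u [<-|//] a; exact: (gen Ftt s ung m g HY HP).
- move=> m s ung g HY HP u [<-|//] a; exact: (gen Fff s ung m g HY HP).
- move=> f1 IH1 f2 IH2 m s ung g HY HP u [<-|Hu] a.
    exact: (gen (For f1 f2) s ung m g HY HP).
  move/andP: m => [m1 m2]; move/andP: g => [g1 g2].
  case: (in_app_or _ _ _ Hu) => H.
    apply: (IH1 m1 s ung g1 HY) => // v Hv; apply: HP; right; apply: in_or_app; by left.
  apply: (IH2 m2 s ung g2 HY) => // v Hv; apply: HP; right; apply: in_or_app; by right.
- move=> f1 IH1 f2 IH2 m s ung g HY HP u [<-|Hu] a.
    exact: (gen (Fand f1 f2) s ung m g HY HP).
  move/andP: m => [m1 m2]; move/andP: g => [g1 g2].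
  case: (in_app_or _ _ _ Hu) => H.
    apply: (IH1 m1 s ung g1 HY) => // v Hv; apply: HP; right; apply: in_or_app; by left.
  apply: (IH2 m2 s ung g2 HY) => // v Hv; apply: HP; right; apply: in_or_app; by right.
- move=> A f1 IH m s ung g HY HP u [<-|Hu] a.
    exact: (gen (Fdia A f1) s ung m g HY HP).
  apply: (IH m s [::] g HY) => // v Hv; apply: HP; by right.
- move=> A f1 IH m s ung g HY HP u [<-|Hu] a.
    exact: (gen (Fbox A f1) s ung m g HY HP).
  apply: (IH m s [::] g HY) => // v Hv; apply: HP; by right.
- by [].
- move=> X f1 IH m s ung g HY HP u [<-|Hu] a.
    exact: (gen (Fmax X f1) s ung m g HY HP).
  apply: (IH m (upd s X (sem (Fmax X f1) s)) (X :: ung) g _ _ u Hu a).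
    move=> Y b; rewrite /upd; case: (Y == X); last exact: HY.
    exact: (gen (Fmax X f1) s ung m g HY HP).
  move=> v Hv; apply: HP; by right.
- move=> X _ s ung _ HY _ u [<-|//] a; exact: HY.
Qed.

End Deriv.

Definition cb (p : Prop) : bool := if excluded_middle_informative p then true else false.
Lemma cbP (p : Prop) : cb p <-> p.
Proof. rewrite /cb; case: excluded_middle_informative => //. Qed.

Section Auto.
Variable Act : finType.
Local Notation form := (form Act).
Local Notation tset := (tset Act).
Local Notation env := (env Act).
Local Notation trace := (trace Act).

Variable U : seq tset.
Local Notation k := (size U).
Definition dflt : tset := fun _ => False.
Definition Ty (t : trace) : {set 'I_k} := [set i : 'I_k | cb (nth dflt U i t)].

Lemma In_nth_ord (u : tset) : List.In u U -> exists i : 'I_k, nth dflt U i = u.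
Proof.
move=> H.
suff [i [Hi E]] : exists i, i < size U /\ nth dflt U i = u by exists (Ordinal Hi).
elim: U H => //= v l IH [->|H]; first by exists 0.
have [i [Hi E]] := IH H; by exists i.+1.
Qed.

Lemma Pos_repr R : Pos (fun u => List.In u U) R ->
  exists Q : {set {set 'I_k}}, forall t, R t <-> Ty t \in Q.
Proof.
elim.
- move=> u /In_nth_ord [i E]. exists [set C : {set 'I_k} | i \in C] => t.
  by rewrite !inE -E cbP.
- exists setT => t; by rewrite inE.
- exists set0 => t; by rewrite inE.
- move=> R1 R2 _ [Q1 H1] _ [Q2 H2]; exists (Q1 :|: Q2) => t.
  rewrite inE H1 H2; split; [by case=> ->; rewrite ?orbT| by case/orP; [left|right]].
- move=> R1 R2 _ [Q1 H1] _ [Q2 H2]; exists (Q1 :&: Q2) => t.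
  rewrite inE H1 H2; split; [by case=> -> ->| by case/andP].
- move=> R1 R2 _ [Q H] E; exists Q => t; by rewrite -E.
Qed.

Hypothesis HU : forall u, List.In u U -> forall a, Pos (fun u => List.In u U) (der a u).

Lemma atom_der (i : 'I_k) (a : Act) :
  exists Q : {set {set 'I_k}}, forall t, nth dflt U i (tcons a t) <-> Ty t \in Q.
Proof.
apply: Pos_repr. apply: HU.
case: i => i /=; elim: U i => //= v l IH [|i] Hi; [by left| right; exact: IH].
Qed.

Definition Qd (i : 'I_k) (a : Act) : {set {set 'I_k}} :=
  proj1_sig (constructive_indefinite_description _ (atom_der i a)).
Lemma QdP (i : 'I_k) a t : nth dflt U i (tcons a t) <-> Ty t \in Qd i a.
Proof. rewrite /Qd; case: constructive_indefinite_description => Q H /=; exact: H. Qed.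

Definition St := {set {set 'I_k}}.
Definition ssem (q : St) : tset := fun t => Ty t \in q.
Definition next (q : St) (a : Act) : St := [set C : {set 'I_k} | [set i | C \in Qd i a] \in q].

Lemma next_ok q a t : ssem (next q a) t <-> ssem q (tcons a t).
Proof.
rewrite /ssem inE.
suff -> : [set i | Ty t \in Qd i a] = Ty (tcons a t) by [].
apply/setP => i; rewrite !inE.
apply/idP/idP => H.
  apply/cbP; apply/QdP; exact: H.
apply/QdP; exact/cbP.
Qed.


Definition ne (q : St) : Prop := exists t, ssem q t.

Fixpoint run (q : St) (t : trace) (n : nat) : St :=
  if n is n'.+1 then run (next q (t 0)) (ttail t) n' else q.

Definition Good (n : nat) (q : St) (t : trace) := forall m, m <= n -> ne (run q t m).

Lemma Good0 q t : ne q -> Good 0 q t.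
Proof. by move=> H [|m]. Qed.
Lemma GoodS n q t : ne q -> Good n (next q (t 0)) (ttail t) -> Good n.+1 q t.
Proof. by move=> H1 H2 [|m] //= Hm; apply: H2. Qed.
Lemma Good_ne n q t : Good n q t -> ne q.
Proof. by move=> /(_ 0 (leq0n _)). Qed.
Lemma Good_le n n' q t : n' <= n -> Good n q t -> Good n' q t.
Proof. move=> Hn H m Hm; apply: H; exact: leq_trans Hm Hn. Qed.

Definition splice (t : trace) (n : nat) (t' : trace) : trace :=
  fun i => if i < n then t i else t' (i - n).

Lemma run_splice n : forall q t t', ssem (run q t n) t' -> ssem q (splice t n t').
Proof.
elim: n => [|n IH] q t t' /=.
  by have -> : splice t 0 t' = t' by apply: functional_extensionality => i; rewrite /splice subn0.
move=> /IH /next_ok.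
suff -> : tcons (t 0) (splice (ttail t) n t') = splice t n.+1 t' by [].
apply: functional_extensionality => -[|i] //=.
Qed.

Lemma Good_Safe q t : (forall n, Good n q t) -> Safe (ssem q) t.
Proof.
move=> H n. have [t' Ht'] := H n n (leqnn n).
exists (splice t n t'); split; last exact: run_splice.
by move=> i Hi; rewrite /splice Hi.
Qed.

Definition code (q : St) : nat := enum_rank q.

Lemma code_inj q1 q2 : code q1 = code q2 -> q1 = q2.
Proof. move=> E; apply: enum_rank_inj; exact: val_inj. Qed.

Definition conj (g : Act -> form) : form :=
  foldr (fun a acc => Fand (Fbox [set a] (g a)) acc) Ftt (enum Act).

Lemma conj_sem g s t : sem (conj g) s t <-> sem (g (t 0)) s (ttail t).
Proof.
have gen : forall l, sem (foldr (fun a acc => Fand (Fbox [set a] (g a)) acc) Ftt l) s t <->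
   (forall a, a \in l -> t 0 = a -> sem (g a) s (ttail t)).
  elim=> [|b l IH] /=; first by split.
  rewrite IH; split.
    move=> [H1 H2] a; rewrite in_cons => /orP [/eqP ->|Ha] E.
      apply: (H1 b (ttail t)); first by rewrite in_set1.
      by rewrite -E tcons_eta.
    exact: H2.
  move=> H; split; last by move=> a Ha; apply: H; rewrite in_cons Ha orbT.
  move=> c t' Hc E. move: Hc; rewrite in_set1 => /eqP Ec; subst c.
  have := H b; rewrite in_cons eqxx /= => /(_ isT).
  by rewrite E => /(_ erefl).
rewrite /conj gen; split; first by move=> H; apply: H; rewrite ?mem_enum.
by move=> H a _ <-.
Qed.

Fixpoint build (fuel : nat) (vis : seq St) (q : St) : form :=
  if q \in vis then Fvar (code q) else
  match fuel with
  | 0 => Ftt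
  | fuel'.+1 => Fmax (code q) (Fand (if cb (ne q) then Ftt else Fff)
                   (conj (fun a => build fuel' (q :: vis) (next q a))))
  end.

Lemma check_sem q s t : sem (if cb (ne q) then @Ftt Act else @Fff Act) s t <-> ne q.
Proof. case E: (cb (ne q)) => /=; split => //; [move=> _; exact/cbP | move/cbP; by rewrite E]. Qed.

Lemma build_complete fuel : forall vis q (s : env),
  (forall q', q' \in vis -> forall t, ssem q' t -> s (code q') t) ->
  forall t, ssem q t -> sem (build fuel vis q) s t.
Proof.
elim: fuel => [|fuel IH] vis q s Hv t Ht /=; case: ifP => Hq /=; try exact: Hv.
  by [].
exists (ssem q); split => // u Hu; split.
  apply/check_sem; by exists u.
apply/conj_sem. apply: IH; last by apply/next_ok; rewrite tcons_eta.
move=> q' Hq' v Hv'; rewrite /upd.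
case: eqP => [/code_inj E|Hne]; first by rewrite -E.
move: Hq'; rewrite in_cons => /orP [/eqP E|H]; first by rewrite E in Hne.
exact: Hv.
Qed.

Definition Inv (fuel : nat) (vis : seq St) := uniq vis /\ #|St| <= fuel + size vis.

Lemma build_sound n : forall fuel vis q (s : env), Inv fuel vis ->
  (forall q', q' \in vis -> forall t, s (code q') t -> Good n q' t) ->
  forall t, sem (build fuel vis q) s t -> Good n q t.
Proof.
elim/ltn_ind: n => n IHn [|fuel] vis q s [Hu Hc] Hv t /=; case: ifP => Hq; try exact: Hv.
  exfalso. have : uniq (q :: vis) by rewrite /= Hq Hu.
  move/card_uniqP => E. have := max_card [pred x in q :: vis].
  rewrite E /= => H. move: Hc; rewrite add0n => H2.
  have := leq_trans H H2; by rewrite ltnn.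
move=> [S [HS St]].
suff : forall j, j <= n -> forall u, S u -> Good j q u by move=> /(_ n (leqnn n)); apply.
elim=> [|j IHj] Hj u Su; have [/check_sem Hne /conj_sem Hb] := HS u Su.
  exact: Good0.
apply: GoodS => //.
apply: (IHn j Hj fuel (q :: vis) _ (upd s (code q) S)) Hb.
  split; first by rewrite /= Hq Hu.
  by rewrite /= addnS -addSn.
move=> q' Hq' v; rewrite /upd; case: eqP => [/code_inj -> Hsv|Hneq Hsv].
  apply: IHj => //; exact: ltnW.
move: Hq'; rewrite in_cons => /orP [/eqP E|H]; first by rewrite E in Hneq.
apply: Good_le (Hv q' H v Hsv); exact: ltnW.
Qed.

End Auto.

Section Syn.
Variable Act : finType.
Variable U : seq (tset Act).
Variable HU : forall u, List.In u U -> forall a, Pos (fun u => List.In u U) (der a u).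


Lemma build_shml fuel : forall vis q, sHML (build HU fuel vis q).
Proof.
elim: fuel => [|fuel IH] vis q /=; case: ifP => //= _.
rewrite /conj; case: (cb _) => /=; elim: (enum Act) => //= a l ->; by rewrite IH.
Qed.

Lemma build_guarded fuel : forall vis q, guarded_in [::] (build HU fuel vis q).
Proof.
elim: fuel => [|fuel IH] vis q /=; case: ifP => //= _.
rewrite /conj; case: (cb _) => /=; elim: (enum Act) => //= a l ->; by rewrite IH.
Qed.

Lemma build_closed fuel : forall vis q bnd, (forall q', q' \in vis -> code q' \in bnd) ->
  closed_in bnd (build HU fuel vis q).
Proof.
elim: fuel => [|fuel IH] vis q bnd H /=; case: ifP => //= Hq; try exact: H.
have H' : forall q', q' \in q :: vis -> code q' \in code q :: bnd.
  move=> q'; rewrite !in_cons => /orP [/eqP ->|Hq']; first by rewrite eqxx.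
  by rewrite H ?orbT.
rewrite /conj; case: (cb _) => /=; elim: (enum Act) => //= a l ->; by rewrite andbT IH.
Qed.
End Syn.

Theorem max_side (Act : finType) (phi : form Act) :
  guarded_in [::] phi -> maxHML phi -> exists psi : form Act,
     [/\ guarded_in [::] psi, closedF psi, sHML psi & forall t, semL psi t <-> semL phi t].
Proof.
move=> g m.
set U := fl phi (@env0 Act).
have HU : forall u, List.In u U -> forall a, Pos (fun u => List.In u U) (der a u).
  apply: (derB m g) => //.
  move=> Y a; apply: Pext (Pbot _) _ => t; by [].
have [q0 Hq0] : exists q0 : St U, forall t, semL phi t <-> ssem q0 t.
  apply: Pos_repr; apply: Pat; exact: fl_head.
exists (build HU #|St U| [::] q0); split.
- exact: build_guarded.
- exact: build_closed.
- exact: build_shml.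
move=> t; split => H.
- have HG : forall n, Good HU n q0 t.
    move=> n; apply: (build_sound (fuel:=#|St U|) (vis:=[::]) (s:=@env0 Act)) H => //.
    by split; rewrite ?addn0.
  have HS : Safe (semL phi) t.
    apply: Safe_mono (Good_Safe HG) => u; by rewrite Hq0.
  have := safe_lemma m HS. apply: sem_mono => X v; exact: Safe_empty.
- apply: build_complete => //. by apply/Hq0.
Qed.

Section Dual.
Variable Act : finType.
Local Notation form := (form Act).
Local Notation tset := (tset Act).
Local Notation env := (env Act).

Fixpoint neg (f : form) : form :=
  match f with
  | Ftt => Fff | Fff => Ftt
  | For f1 f2 => Fand (neg f1) (neg f2)
  | Fand f1 f2 => For (neg f1) (neg f2)
  | Fdia A f1 => Fbox A (neg f1)
  | Fbox A f1 => Fdia A (neg f1)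
  | Fmin X f1 => Fmax X (neg f1)
  | Fmax X f1 => Fmin X (neg f1)
  | Fvar X => Fvar X
  end.

Lemma neg_maxHML f : maxHML (neg f) = minHML f.
Proof. by elim: f => //= f1 -> f2 ->. Qed.
Lemma neg_cHML f : sHML f -> cHML (neg f).
Proof.
elim: f => //=.
- by move=> f1 IH1 f2 IH2 /andP[/IH1 -> /IH2 ->].

Qed.
Lemma neg_guarded f : forall ung, guarded_in ung (neg f) = guarded_in ung f.
Proof.
elim: f => /= [||f1 IH1 f2 IH2|f1 IH1 f2 IH2|A f1 IH|A f1 IH|X f1 IH|X f1 IH|X] ung;
  by rewrite ?IH1 ?IH2 ?IH.
Qed.
Lemma neg_closed f : forall bnd, closed_in bnd (neg f) = closed_in bnd f.
Proof.
elim: f => /= [||f1 IH1 f2 IH2|f1 IH1 f2 IH2|A f1 IH|A f1 IH|X f1 IH|X f1 IH|X] ung;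
  by rewrite ?IH1 ?IH2 ?IH.
Qed.

Definition cenv (s : env) : env := fun X u => ~ s X u.

Lemma sem_neg f : forall s t, sem (neg f) (cenv s) t <-> ~ sem f s t.
Proof.
elim: f => /=.
- move=> s t; tauto.
- move=> s t; tauto.
- move=> f1 IH1 f2 IH2 s t; rewrite IH1 IH2; tauto.
- move=> f1 IH1 f2 IH2 s t; rewrite IH1 IH2; split; [tauto|].
  move=> H; apply: NNPP => H'; apply: H; split; apply: NNPP; tauto.
- move=> A f1 IH s t; split.
    move=> H [b [t' [Hb [H1 E]]]]. exact: (proj1 (IH s t') (H b t' Hb E) H1).
  move=> H b t' Hb E; apply/IH => H1; apply: H; by exists b, t'.
- move=> A f1 IH s t; split.
    move=> [b [t' [Hb [H1 E]]]] H. exact: (proj1 (IH s t') H1 (H b t' Hb E)).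
  move=> H; apply: NNPP => H'; apply: H => b t' Hb E; apply: NNPP => H1.
  apply: H'; exists b, t'; split=> //; split=> //; exact/IH.
- move=> X f1 IH s t; split.
    move=> [S [HS St]] H.
    have : ~ S t.
      apply: (H (fun u => ~ S u)) => u Hu Su.
      have := HS u Su => /(sem_mono (s2 := cenv (upd s X (fun u => ~ S u)))).
      move=> /(_ _) /IH; apply => //.
      move=> Y v; rewrite /cenv /upd; case: (Y == X) => //. tauto.
    by [].
  move=> H. have [S' HS'] := not_all_ex_not _ _ H.
  have [Hpre nS] := imply_to_and _ _ HS'.
  exists (fun u => ~ S' u); split => // u nSu.
  have : ~ sem f1 (upd s X S') u by move=> /Hpre.
  move=> /IH; apply: sem_mono => Y v; rewrite /cenv /upd; by case: (Y == X).
- move=> X f1 IH s t; split.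
    move=> H [S0 [HS0 S0t]].
    apply: (H (fun u => ~ S0 u)) S0t => u Hu S0u.
    have : sem (neg f1) (cenv (upd s X S0)) u.
      apply: sem_mono Hu => Y v; rewrite /cenv /upd; by case: (Y == X).
    move=> /IH; apply; exact: HS0.
  move=> H S HS; apply: NNPP => nSt; apply: H.
  exists (fun u => ~ S u); split => // u nSu; apply: NNPP => H1.
  apply: nSu; apply: HS.
  have := proj2 (IH (upd s X (fun u => ~ S u)) u) H1.
  apply: sem_mono => Y v; rewrite /cenv /upd; case: (Y == X) => //; exact: NNPP.
- by move=> X s t; split.
Qed.

Lemma sem_closed f : forall bnd (s1 s2 : env), closed_in bnd f ->
  (forall X, X \in bnd -> forall t, s1 X t <-> s2 X t) -> forall t, sem f s1 t <-> sem f s2 t.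
Proof.
elim: f => //=.
- move=> f1 IH1 f2 IH2 bnd s1 s2 /andP[c1 c2] H t; by rewrite (IH1 _ _ _ c1 H) (IH2 _ _ _ c2 H).
- move=> f1 IH1 f2 IH2 bnd s1 s2 /andP[c1 c2] H t; by rewrite (IH1 _ _ _ c1 H) (IH2 _ _ _ c2 H).
- move=> A f1 IH bnd s1 s2 c H t; split=> [[b [t' [Hb [H1 E]]]]|[b [t' [Hb [H1 E]]]]];
  exists b, t'; split=> //; split=> //; by [apply/(IH _ _ _ c H)|apply/(IH _ _ _ c H)].
- move=> A f1 IH bnd s1 s2 c H t; split=> H1 b t' Hb E;
  by [apply/(IH _ _ _ c H); exact: H1 Hb E|apply/(IH _ _ _ c H); exact: H1 Hb E].
- move=> X f1 IH bnd s1 s2 c H t.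
  have E : forall S u, sem f1 (upd s1 X S) u <-> sem f1 (upd s2 X S) u.
    move=> S u; apply: (IH (X :: bnd)) => // Y; rewrite in_cons /upd.
    case: (Y == X) => //= HY v; exact: H.
  split=> H1 S HS; apply: H1 => u Hu; apply: HS; by apply/E.
- move=> X f1 IH bnd s1 s2 c H t.
  have E : forall S u, sem f1 (upd s1 X S) u <-> sem f1 (upd s2 X S) u.
    move=> S u; apply: (IH (X :: bnd)) => // Y; rewrite in_cons /upd.
    case: (Y == X) => //= HY v; exact: H.
  split=> [[S [HS St]]|[S [HS St]]]; exists S; split=> // u Su; apply/E; exact: HS.
- move=> X bnd s1 s2 c H t; exact: H.
Qed.

Lemma semL_neg f : closedF f -> forall t, semL (neg f) t <-> ~ semL f t.
Proof.
move=> c t. rewrite /semL -sem_neg.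
apply: (sem_closed (bnd := [::])) => //. by rewrite /closedF neg_closed.
Qed.

End Dual.

Theorem mainTheorem15 (Act : finType) (phi : form Act) :
  recHML phi -> closedF phi ->
  (maxHML phi -> exists psi : form Act,
     [/\ recHML psi, closedF psi, sHML psi & forall t, semL psi t <-> semL phi t]) /\
  (minHML phi -> exists psi : form Act,
     [/\ recHML psi, closedF psi, cHML psi & forall t, semL psi t <-> semL phi t]).
Proof.
move=> g c; split.
  move=> m; have [psi [g' c' s' E]] := max_side g m; by exists psi.
move=> m.
have m' : maxHML (neg phi) by rewrite neg_maxHML.
have g' : guarded_in [::] (neg phi) by rewrite neg_guarded.
have [psi [gp cp sp E]] := max_side g' m'.
exists (neg psi); split.
- by rewrite /recHML /guarded neg_guarded.
- by rewrite /closedF neg_closed.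
- exact: neg_cHML.
move=> t; rewrite semL_neg // E semL_neg //; split; [exact: NNPP| tauto].
Qed.
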